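(* Every unital coarse topological space has a coarsening family.
   Context: A coarse space is a set $X$ with a family of subsets of $X\times X$ (entourages) such that finite unions, inverses $M^{-1}=\{(y,x):(x,y)\in M\}$ and compositions $M_1M_2=\{(x,z):\exists y,(x,y)\in M_1,(y,z)\in M_2\}$ of entourages are contained in entourages and the union of all entourages is $X\times X$. It is unital if the diagonal is contained in an entourage. $M(x)=\{y:(y,x)\in M\}$; a bounded set is one contained in some $M(x)$. A coarse topological space is a coarse space with a Hausdorff topology in which every entourage is open and every bounded set has compact closure. A good cover of $X$ is a cover by bounded sets such that each point lies in only finitely many of the sets. For good covers $\mathcal U,\mathcal V$ a coarsening map is a map $\phi\colon\mathcal U\to\mathcal V$ with $U\subseteq\phi(U)$ for all $U\in\mathcal U$. A coarsening family is a directed family $(\mathcal U_i,\phi_{ij})_{i\in I}$ of good covers with coarsening maps $\phi_{ij}\colon\mathcal U_i\to\mathcal U_j$ ($i\le j$), together with entourages $(M_i)_{i\in I}$, such that: every $U\in\mathcal U_i$ is contained in $M_i(x)$ for some $x\in X$; whenever $i<j$ and $x\in X$ there is $U\in\mathcal U_j$ with $M_i(x)\subseteq U$; every entourage is contained in $M_i$ for some $i$. *)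

(* Defs.v *)
From mathcomp Require Import all_boot all_classical.
From mathcomp Require Import topology.
Set Implicit Arguments. Unset Strict Implicit. Unset Printing Implicit Defensive.
Local Open Scope classical_set_scope.

Definition rel_inv {X : Type} (M : set (X * X)) : set (X * X) :=
  [set p | M (p.2, p.1)].

Definition rel_comp {X : Type} (M1 M2 : set (X * X)) : set (X * X) :=
  [set p | exists y, M1 (p.1, y) /\ M2 (y, p.2)].

Definition rel_section {X : Type} (M : set (X * X)) (x : X) : set X :=
  [set y | M (y, x)].

Definition coarse_structure {X : Type} (E : set (set (X * X))) : Prop :=
  [/\ (forall M1 M2, E M1 -> E M2 -> exists M, E M /\ M1 `|` M2 `<=` M),
      (forall M, E M -> exists N, E N /\ rel_inv M `<=` N),
      (forall M1 M2, E M1 -> E M2 -> exists N, E N /\ rel_comp M1 M2 `<=` N)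
    & (forall p : X * X, exists M, E M /\ M p)].

Definition coarse_unital {X : Type} (E : set (set (X * X))) : Prop :=
  exists M, E M /\ [set p : X * X | p.1 = p.2] `<=` M.

Definition coarse_bounded {X : Type} (E : set (set (X * X))) (B : set X) : Prop :=
  exists M x, E M /\ B `<=` rel_section M x.

Definition coarse_topological {T : topologicalType} (E : set (set (T * T))) : Prop :=
  [/\ coarse_structure E, hausdorff_space T,
      (forall M, E M -> open M)
    & (forall B, coarse_bounded E B -> compact (closure B))].

Definition good_cover {X : Type} (E : set (set (X * X))) (C : set (set X)) : Prop :=
  [/\ (forall U, C U -> coarse_bounded E U),
      (forall x, exists U, C U /\ U x)
    & (forall x, finite_set [set U | C U /\ U x])].

Definition coarsening_map {X : Type} (C D : set (set X)) (phi : set X -> set X) : Prop :=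
  forall U, C U -> D (phi U) /\ U `<=` phi U.

Definition directed_order {I : Type} (le : I -> I -> Prop) : Prop :=
  [/\ (exists i : I, True),
      (forall i, le i i),
      (forall i j k, le i j -> le j k -> le i k),
      (forall i j, le i j -> le j i -> i = j)
    & (forall i j, exists k, le i k /\ le j k)].

Definition coarsening_family {X : Type} (E : set (set (X * X))) {I : Type}
  (le : I -> I -> Prop) (Us : I -> set (set X)) (phi : I -> I -> set X -> set X)
  (Ms : I -> set (X * X)) : Prop :=
  directed_order le /\
  (forall i, good_cover E (Us i)) /\
  (forall i j, le i j -> coarsening_map (Us i) (Us j) (phi i j)) /\
  (forall i, E (Ms i)) /\
  (forall i U, Us i U -> exists x, U `<=` rel_section (Ms i) x) /\
  (forall i j x, le i j -> i <> j ->
      exists U, Us j U /\ rel_section (Ms i) x `<=` U) /\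
  (forall M, E M -> exists i, M `<=` Ms i).

(* Main.v *)
From HB Require Import structures.
Require Import Defs.
From mathcomp Require Import all_boot all_classical.
From mathcomp Require Import topology.
From mathcomp Require Import finmap.
Set Implicit Arguments. Unset Strict Implicit. Unset Printing Implicit Defensive.
Local Open Scope classical_set_scope.

Definition bigrel {X : Type} (a : set (X * X)) := rel_comp a (rel_comp a (rel_inv a)).
Definition diagr {X : Type} := [set p : X * X | p.1 = p.2].

Lemma rel_comp_sub {X : Type} (M1 M2 N1 N2 : set (X * X)) :
  M1 `<=` N1 -> M2 `<=` N2 -> rel_comp M1 M2 `<=` rel_comp N1 N2.
Proof. by move=> h1 h2 [x z] [y [/h1 ? /h2 ?]]; exists y. Qed.

Lemma bigrel_ent {X : Type} (E : set (set (X * X))) a :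
  coarse_structure E -> E a -> exists b, E b /\ bigrel a `<=` b.
Proof.
case=> _ hinv hcomp _ Ea.
have [N1 [EN1 s1]] := hinv _ Ea.
have [N2 [EN2 s2]] := hcomp _ _ Ea EN1.
have [N3 [EN3 s3]] := hcomp _ _ Ea EN2.
exists N3; split => //.
apply: subset_trans s3; apply: rel_comp_sub => //.
apply: subset_trans s2; exact: rel_comp_sub.
Qed.

Lemma sub_bigrel {X : Type} (a : set (X * X)) : diagr `<=` a -> a `<=` bigrel a.
Proof.
move=> hd [y d] ayd; exists d; split => //; exists d; split.
  by apply: hd.
by rewrite /rel_inv /=; apply: hd.
Qed.

Lemma section_open (T : topologicalType) (M : set (T * T)) z :
  open M -> open (rel_section M z).
Proof.
move=> oM.
have -> : rel_section M z = (fun y => (y, z)) @^-1` M by [].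
apply: open_comp => // y _.
by apply: cvg_pair => //=; exact: cvg_cst.
Qed.

Definition pwrap (T : topologicalType) (y : T) : Type := T.
HB.instance Definition _ (T : topologicalType) (y : T) := Topological.copy (@pwrap T y) T.
HB.instance Definition _ (T : topologicalType) (y : T) := isPointed.Build (@pwrap T y) y.
Lemma cover_of (T : topologicalType) (y : T) (A : set T) : compact A -> cover_compact A.
Proof.
move=> cA.
have : @compact (@pwrap T y) A by exact: cA.
rewrite compact_cover => h; exact: h.
Qed.
Lemma cover_lemma (T : topologicalType) (E : set (set (T * T))) (a b : set (T * T)) :
  coarse_topological E -> E a -> diagr `<=` a -> bigrel a `<=` b -> E b ->
  exists C, good_cover E C /\ (forall U, C U -> exists y, U `<=` rel_section b y) /\
    (forall x, exists U, C U /\ rel_section a x `<=` U).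
Proof.
move=> [cs _ hopen hcpt] Ea hd hab Eb.
pose sep (D : set T) := forall d d' z, D d -> D d' -> a (d, z) -> a (d', z) -> d = d'.
have [D [sepD maxD]] : exists D, sep D /\ forall B, D `<` B -> ~ sep B.
  apply: Zorn_bigcup => F FP tot d d' z [X FX Xd] [Y FY Yd'] adz ad'z.
  have [XY|YX] := tot _ _ FX FY.
    by apply: (FP _ FY) d d' z (XY _ Xd) Yd' adz ad'z.
  by apply: (FP _ FX) d d' z Xd (YX _ Yd') adz ad'z.
have near : forall x, exists d z, D d /\ a (x, z) /\ a (d, z).
  move=> x; apply: contrapT => nx.
  have nDx : ~ D x by move=> Dx; apply: nx; exists x, x; split => //; split; apply: hd.
  apply: (maxD (D `|` [set x])).
    split; first by move=> y Dy; left.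
    by move=> /(_ x (or_intror erefl)).
  move=> d d' z [Dd|->] [Dd'|->] adz ad'z.
  - exact: sepD adz ad'z.
  - by exfalso; apply: nx; exists d, z.
  - by exfalso; apply: nx; exists d', z.
  - by [].
pose C := [set U | exists2 d, D d & U = rel_section (bigrel a) d].
have [N [EN sN]] : exists N, E N /\ rel_inv b `<=` N.
  by case: cs => _ hinv _ _; apply: hinv.
exists C; split; [split|split].
- move=> U [d Dd ->]; exists b, d; split => // y; exact: hab.
- move=> x; have [d [z [Dd [axz adz]]]] := near x.
  exists (rel_section (bigrel a) d); split; first by exists d.
  exists x; split; first by apply: hd.
  by exists z.
- move=> y.
  pose K := rel_section N y.
  have cK : compact (closure K).
    by apply: hcpt; exists N, y; split.
  have cc : cover_compact (closure K) := cover_of y cK.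
  have [D' sD' cov] := cc T (closure K) (rel_section a)
    (fun z _ => section_open z (hopen _ Ea))
    (fun z c => ex_intro2 _ _ z c (hd (z, z) erefl)).
  have finDK : finite_set (D `&` closure K).
    have sub : D `&` closure K `<=` \bigcup_(z in [set` D']) (D `&` rel_section a z).
      by move=> d [Dd /cov [z zD' azd]]; exists z.
    apply: (sub_finite_set sub).
    apply: bigcup_finite; first exact: finite_fset.
    move=> z _.
    have [[d0 [Dd0 ad0]]|n0] := pselect (exists d0, D d0 /\ rel_section a z d0).
      apply: (@sub_finite_set _ _ [set d0]); last exact: finite_set1.
      by move=> d [Dd ad]; apply: (sepD d d0 z).
    suff -> : D `&` rel_section a z = set0 by [].
    by apply/seteqP; split => // d [Dd ad]; apply: n0; exists d.
  apply: (@sub_finite_set _ _ ((rel_section (bigrel a)) @` (D `&` closure K))).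
    move=> U [[d Dd ->] byd]; exists d => //; split => //.
    apply: subset_closure; apply: sN; exact: hab.
  exact: finite_image.
- move=> U [d Dd ->]; exists d => y; exact: hab.
- move=> x; have [d [z [Dd [axz adz]]]] := near x.
  exists (rel_section (bigrel a) d); split; first by exists d.
  move=> y ayx; exists x; split => //; by exists z.
Qed.

Definition valid {T : Type} (E : set (set (T * T))) (p : set (T * T) * set (T * T)) :=
  [/\ E p.1, E p.2, diagr `<=` p.1 & bigrel p.1 `<=` p.2].

Lemma sig_eq {A : Type} (P : A -> Prop) (p q : {x | P x}) : proj1_sig p = proj1_sig q -> p = q.
Proof. case: p q => x px [y py] /= exy; subst y; by rewrite (Prop_irrelevance px py). Qed.

Theorem mainTheorem6 (T : topologicalType) (E : set (set (T * T))) :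
  coarse_topological E -> coarse_unital E ->
  exists (I : Type) (le : I -> I -> Prop) (Us : I -> set (set T))
         (phi : I -> I -> set T -> set T) (Ms : I -> set (T * T)),
    coarsening_family E le Us phi Ms.
Proof.
move=> ct [D0 [ED0 dD0]].
have ct' := ct; case: ct' => cs _ _ _.
have cs' := cs; case: cs' => hU _ _ _.
have above : forall M, E M -> exists p : {p | valid E p}, M `<=` (proj1_sig p).1.
  move=> M EM.
  have [M2 [EM2 sM2]] := hU _ _ EM ED0.
  have [b [Eb sb]] := bigrel_ent cs EM2.
  have v : valid E (M2, b).
    split => //=; apply: subset_trans sM2 => p dp; by right; apply: dD0.
  by exists (exist _ _ v) => /= p Mp; apply: sM2; left.
pose I := {p | valid E p}.
pose le (i j : I) := proj1_sig i = proj1_sig j \/ (proj1_sig i).2 `<=` (proj1_sig j).1.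
pose Ms (i : I) := (proj1_sig i).2.
have sub12 : forall i : I, (proj1_sig i).1 `<=` (proj1_sig i).2.
  move=> [[a b] [Ea Eb da bab]] /=.
  exact: subset_trans (sub_bigrel da) bab.
have EMs : forall i, E (Ms i) by move=> [[a b] [? ? ? ?]].
have H1 : forall i : I, exists C, good_cover E C /\ (forall U, C U -> exists y, U `<=` rel_section (Ms i) y) /\ (forall x, exists U, C U /\ rel_section (proj1_sig i).1 x `<=` U).
  move=> -[[a b] [Ea Eb da bab]]; exact: cover_lemma ct Ea da bab Eb.
have [Us HUs] := choice H1.
have H2 : forall t : I * I * set T, exists V, le t.1.1 t.1.2 ->
    Us t.1.1 t.2 -> Us t.1.2 V /\ t.2 `<=` V.
  move=> -[[i j] U] /=.
  have [lij|nl] := pselect (le i j); last by exists U.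
  have [UiU|nU] := pselect (Us i U); last by exists U.
  case: lij => [eij|sij].
    rewrite -(sig_eq eij); by exists U => _ ?; split.
  have [_ [hin _]] := HUs i; have [y Uy] := hin _ UiU.
  have [_ [_ hcov]] := HUs j; have [V [UjV sV]] := hcov y.
  exists V => _ _; split => // z Uz; apply: sV; apply: sij; exact: Uy.
have [phif Hphi] := choice H2.
exists I, le, Us, (fun i j U => phif (i, j, U)), Ms.
split; [split|split; [|split; [|split; [|split; [|split]]]]].
- by have [p _] := above _ ED0; exists p.
- by move=> i; left.
- move=> i j k [eij|sij] [ejk|sjk].
  + by left; rewrite eij.
  + by right; rewrite eij.
  + by right; rewrite -ejk.
  + right; exact: subset_trans sij (subset_trans (sub12 j) sjk).
- move=> i j [eij|sij] [eji|sji]; apply: sig_eq => //.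
  move: sij sji (sub12 i) (sub12 j).
  case: i => [[a1 b1] vi]; case: j => [[a2 b2] vj] /= s1 s2 s3 s4.
  have e1 : a1 = a2.
    by apply/seteqP; split; [exact: subset_trans s3 s1 | exact: subset_trans s4 s2].
  have e2 : b1 = b2.
    by apply/seteqP; split; [exact: subset_trans s1 s4 | exact: subset_trans s2 s3].
  by rewrite e1 e2.
- move=> i j.
  have [M [EM sM]] := hU _ _ (EMs i) (EMs j).
  have [k sk] := above _ EM.
  exists k; split; right; apply: subset_trans sk => p h; apply: sM; [left|right] => //.
- by move=> i; case: (HUs i).
- by move=> i j lij U UiU; exact: (Hphi (i, j, U) lij UiU).
- exact: EMs.
- by move=> i; case: (HUs i) => _ [].
- move=> i j x [eij|sij] nij; first by case: nij; exact: sig_eq.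
  have [_ [_ hcov]] := HUs j; have [V [UjV sV]] := hcov x.
  by exists V; split => // z hz; apply: sV; apply: sij; exact: hz.
- move=> M EM; have [p sp] := above _ EM; exists p; exact: subset_trans sp (sub12 p).
Qed.
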